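(* Let $\Delta$ be a simplicial polytopal fan in $\mathbb{R}^d$ with ray generators $\mathbf{v}_1,\ldots,\mathbf{v}_n$. Let $\mathbf{u}^{(1)},\mathbf{u}^{(2)},\ldots\in\mathbb{S}^{d-1}$ be a sequence of directions for which there exist $0\le t<1/2$, $\delta>0$ and $N\in\mathbb{N}$ such that \[ |\{\mathbf{u}^{(1)},\ldots,\mathbf{u}^{(m)}\}\cap C_t(i)|\ge m(2.5nt+\delta) \] for all $m\ge N$ and all $1\le i\le n$. Then, with $U=(\mathbf{u}^{(1)},\ldots,\mathbf{u}^{(m)})^\mathsf{T}$, \[ \lambda_1(A_U^\mathsf{T}A_U)\ge\frac{m\delta}{\max_{1\le i\le n}\|\mathbf{v}_i\|^2} \] for all $m\ge N$.
   Context: A fan is simplicial if every cone is generated by linearly independent vectors; polytopal if it is the normal fan of a polytope. For $\mathbf{u}\in\mathbb{R}^d$, with $\sigma$ the cone of $\Delta$ containing $\mathbf{u}$ in its relative interior and $\mathbf{u}=\sum_{k\in I_\sigma}\lambda_k\mathbf{v}_k$ over the generators of $\sigma$, set $[\mathbf{u}]_i=\lambda_i$ for $i\in I_\sigma$ and $0$ otherwise; $A_U$ is the $m\times n$ matrix with rows $[\mathbf{u}^{(i)}]^\mathsf{T}$. $W$ is the $n\times n$ diagonal matrix with diagonal entries $\|\mathbf{v}_1\|,\ldots,\|\mathbf{v}_n\|$, and $C_t(j)=\{\mathbf{x}\in\mathbb{R}^d\colon\|[\mathbf{x}]^\mathsf{T}W-\mathbf{e}_j\|_\infty\le t\}$.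 $\lambda_1(A)$ denotes the smallest eigenvalue of a symmetric matrix $A$. *)

(* Defs.v *)
From HB Require Import structures.
From mathcomp Require Import all_boot all_order all_algebra.
From mathcomp Require Import boolp classical_sets reals.
Set Implicit Arguments. Unset Strict Implicit. Unset Printing Implicit Defensive.
Import Order.TTheory GRing.Theory Num.Theory.
Local Open Scope ring_scope.
Local Open Scope classical_set_scope.

Section FanDefs.
Variables (R : realType) (d n : nat).

Definition dotv (x y : 'rV[R]_d) : R := \sum_(k < d) x 0 k * y 0 k.
Definition vnorm (x : 'rV[R]_d) : R := Num.sqrt (dotv x x).

Definition gen_cone (v : 'I_n -> 'rV[R]_d) (S : {set 'I_n}) : set 'rV[R]_d :=
  [set x | exists lam : 'I_n -> R,
     (forall i, 0 <= lam i) /\ (forall i, i \notin S -> lam i = 0) /\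
     x = \sum_(i < n) lam i *: v i].

Definition lin_indep (v : 'I_n -> 'rV[R]_d) (S : {set 'I_n}) : Prop :=
  forall lam : 'I_n -> R, \sum_(i in S) lam i *: v i = 0 -> forall i, i \in S -> lam i = 0.

(* Delta (a family of index sets, cone S = gen_cone v S) is a simplicial fan
   in R^d whose ray generators are exactly v_1, ..., v_n. *)
Definition simplicial_fan (v : 'I_n -> 'rV[R]_d) (Delta : {set {set 'I_n}}) : Prop :=
  [/\ (forall i, v i != 0),
      (forall i, [set i]%SET \in Delta),
      (forall S T : {set 'I_n}, S \in Delta -> T \subset S -> T \in Delta),
      (forall S T : {set 'I_n}, S \in Delta -> T \in Delta ->
          gen_cone v S `&` gen_cone v T = gen_cone v (S :&: T))
    & (forall S : {set 'I_n}, S \in Delta -> lin_indep v S)].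

(* Normal cone of the face of P = conv(p_1..p_k) on which c is maximised. *)
Definition normal_cone (k : nat) (p : 'I_k -> 'rV[R]_d) (c : 'rV[R]_d) : set 'rV[R]_d :=
  [set y | forall j, (forall l, dotv c (p l) <= dotv c (p j)) ->
                     forall l, dotv y (p l) <= dotv y (p j)].

Definition polytopal (v : 'I_n -> 'rV[R]_d) (Delta : {set {set 'I_n}}) : Prop :=
  exists k (p : 'I_k -> 'rV[R]_d), (0 < k)%N /\
    (forall S : {set 'I_n}, S \in Delta -> exists c, gen_cone v S = normal_cone p c) /\
    (forall c, exists S : {set 'I_n}, S \in Delta /\ gen_cone v S = normal_cone p c).

(* lam is the coordinate vector [x]: x lies in the relative interior of the
   cone sigma_S, S in Delta, and x = sum_{k in S} lam_k v_k. *)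
Definition is_fancoord (v : 'I_n -> 'rV[R]_d) (Delta : {set {set 'I_n}})
  (x : 'rV[R]_d) (lam : 'rV[R]_n) : Prop :=
  exists S : {set 'I_n}, [/\ S \in Delta, (forall i, i \notin S -> lam 0 i = 0),
               (forall i, i \in S -> 0 < lam 0 i) & x = \sum_(i < n) lam 0 i *: v i].

(* [x] (well defined: unique for a simplicial fan; complete fans cover R^d). *)
Definition fancoord (v : 'I_n -> 'rV[R]_d) (Delta : {set {set 'I_n}})
  (x : 'rV[R]_d) : 'rV[R]_n := xget 0 [set lam | is_fancoord v Delta x lam].

(* A_U : rows [u^(1)]^T, ..., [u^(m)]^T  (u^(i) = u i, i >= 1). *)
Definition A_U (v : 'I_n -> 'rV[R]_d) (Delta : {set {set 'I_n}})
  (u : nat -> 'rV[R]_d) (m : nat) : 'M[R]_(m, n) :=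
  \matrix_(i < m, k < n) fancoord v Delta (u i.+1) 0 k.

Definition C_t (v : 'I_n -> 'rV[R]_d) (Delta : {set {set 'I_n}})
  (t : R) (j : 'I_n) : set 'rV[R]_d :=
  [set x | forall i : 'I_n,
     `|fancoord v Delta x 0 i * vnorm (v i) - (i == j)%:R| <= t].

Definition count_in (u : nat -> 'rV[R]_d) (m : nat) (C : set 'rV[R]_d) : nat :=
  size (undup [seq u k | k <- iota 1 m & `[< C (u k) >]]).

End FanDefs.

Definition lambda1 (R : realType) (k : nat) (M : 'M[R]_k) : R :=
  inf [set a : R | eigenvalue M a].

(* Main.v *)
Require Import Defs.
From HB Require Import structures.
From mathcomp Require Import all_boot all_order all_algebra.
From mathcomp Require Import boolp classical_sets reals.
From mathcomp Require Import ring lra.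
From mathcomp Require Import complex.
Import Order.TTheory GRing.Theory Num.Theory.
Set Implicit Arguments. Unset Strict Implicit. Unset Printing Implicit Defensive.
Local Open Scope ring_scope.
Local Open Scope classical_set_scope.

Lemma cs_abs (R : realFieldType) n (z : 'I_n -> R) :
  (\sum_j `|z j|) ^+ 2 <= n%:R * \sum_j z j ^+ 2.
Proof.
have H : forall a b : R, 2 * (`|a| * `|b|) <= a ^+ 2 + b ^+ 2.
  move=> a b; rewrite -[a ^+ 2]real_normK ?num_real // -[b ^+ 2]real_normK ?num_real //.
  have := sqr_ge0 (`|a| - `|b|); lra.
rewrite expr2 mulr_suml.
have E : \sum_i `|z i| * \sum_j `|z j| = \sum_i \sum_j `|z i| * `|z j|.
  by apply: eq_bigr => i _; rewrite mulr_sumr.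
rewrite E.
suff : 2 * (\sum_i \sum_j `|z i| * `|z j|) <= 2 * (n%:R * \sum_j z j ^+ 2) by lra.
rewrite [X in X <= _]mulr_sumr.
apply: le_trans (_ : \sum_i \sum_j (z i ^+ 2 + z j ^+ 2) <= _).
  by apply: ler_sum => i _; rewrite mulr_sumr; apply: ler_sum => j _.
rewrite (eq_bigr (fun i => n%:R * z i ^+ 2 + \sum_j z j ^+ 2)); last first.
  by move=> i _; rewrite big_split /= sumr_const card_ord mulr_natl.
rewrite big_split /= sumr_const card_ord -mulr_sumr mulr_natl.
lra.
Qed.

Lemma pt_bound (R : realFieldType) (z e t K : R) :
  0 <= t -> t < 1 -> 0 <= K -> e ^+ 2 <= t ^+ 2 * K ->
  (1 - t) * z ^+ 2 - (1 - t) * t * K <= (z + e) ^+ 2.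
Proof.
move=> t0 t1 K0 he.
have [tz|tp] := eqVneq t 0.
  rewrite tz in he *.
  have e0 : e = 0.
    by apply/eqP; rewrite -sqrf_eq0 eq_le sqr_ge0 andbT; move: he; rewrite expr0n /= mul0r.
  by rewrite e0; lra.
have tpos : 0 < t by rewrite lt_def tp t0.
have H : t * ((1 - t) * z ^+ 2 - (1 - t) * t * K) <= t * (z + e) ^+ 2.
  have : 0 <= (t * z + e) ^+ 2 by apply: sqr_ge0.
  nra.
by rewrite ler_pM2l in H.
Qed.

Lemma atmost1 (R : realFieldType) n (P : 'I_n -> bool) (Q : 'I_n -> R) :
  (forall i j, P i -> P j -> i = j) ->
  (exists2 i, P i & \sum_j (P j)%:R * Q j = Q i) \/ (\sum_j (P j)%:R * Q j = 0).
Proof.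
move=> uP; case: (pickP P) => [i Pi | nP].
  left; exists i => //; rewrite (bigD1 i) //= Pi mul1r big1 ?addr0 //.
  move=> j ji; case Pj: (P j); last by rewrite mul0r.
  by rewrite (uP _ _ Pj Pi) eqxx in ji.
by right; apply: big1 => j _; rewrite nP mul0r.
Qed.

Lemma main_bound (R : realFieldType) m n (A : 'M[R]_(m,n)) (w : 'I_n -> R)
  (P : 'I_m -> 'I_n -> bool) (t de : R) :
  0 <= t -> t < 1 ->
  (forall k i j, P k i -> P k j -> i = j) ->
  (forall k i, P k i -> forall j, `|A k j * w j - (j == i)%:R| <= t) ->
  (forall i, m%:R * (5 / 2 * n%:R * t + de) <= \sum_k (P k i)%:R) ->
  t * de <= t * (3 / 2 * n%:R * (1 - t)) ->
  forall z : 'I_n -> R,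
  m%:R * de * \sum_j z j ^+ 2 <= \sum_k (\sum_j A k j * w j * z j) ^+ 2.
Proof.
move=> t0 t1 uP hP hc hd z.
set Z := \sum_j z j ^+ 2.
have Z0 : 0 <= Z by apply: sumr_ge0 => j _; exact: sqr_ge0.
pose Q i := (1 - t) * z i ^+ 2 - (1 - t) * t * (n%:R * Z).
have step1 : forall k i, P k i -> Q i <= (\sum_j A k j * w j * z j) ^+ 2.
  move=> k i Pki.
  set e := \sum_j (A k j * w j - (j == i)%:R) * z j.
  have -> : \sum_j A k j * w j * z j = z i + e.
    rewrite /e -[RHS]addrC. 
    have -> : z i = \sum_j (j == i)%:R * z j.
      by rewrite (bigD1 i) //= eqxx mul1r big1 ?addr0 // => j /negbTE ->; rewrite mul0r.
    rewrite -big_split /=; apply: eq_bigr => j _; ring.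
  apply: pt_bound => //; first by rewrite mulr_ge0 ?ler0n.
  have ea : `|e| <= t * \sum_j `|z j|.
    rewrite mulr_sumr; apply: le_trans (ler_norm_sum _ _ _) _.
    by apply: ler_sum => j _; rewrite normrM ler_wpM2r ?normr_ge0 ?hP.
  have : e ^+ 2 <= (t * \sum_j `|z j|) ^+ 2.
    by rewrite -real_normK ?num_real // !expr2; apply: ler_pM.
  move/le_trans; apply; rewrite exprMn; apply: ler_wpM2l; first exact: sqr_ge0.
  exact: cs_abs.
have sum1 : forall k, \sum_i (P k i)%:R <= 1 :> R.
  move=> k; case: (@atmost1 R n (P k) (fun _ => 1) (uP k)) => [[i _]|];
  by rewrite (eq_bigr (fun j => (P k j)%:R)) => [->| j _]; rewrite ?mulr1.
have step2 : forall k, \sum_i (P k i)%:R * Q i <= (\sum_j A k j * w j * z j) ^+ 2.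
  move=> k; case: (@atmost1 R n (P k) Q (uP k)) => [[i Pi ->]|->].
    exact: step1.
  exact: sqr_ge0.
apply: le_trans (_ : \sum_i (\sum_k (P k i)%:R) * Q i <= _); last first.
  rewrite (eq_bigr (fun i => \sum_k (P k i)%:R * Q i)); last by move=> i _; rewrite mulr_suml.
  rewrite exchange_big /=; apply: ler_sum => k _; exact: step2.
pose c := fun i => \sum_k (P k i)%:R : R.
change (m%:R * de * Z <= \sum_i c i * Q i).
have E : \sum_i c i * Q i = (1 - t) * (\sum_i c i * z i ^+ 2) - (1 - t) * t * (n%:R * Z) * (\sum_i c i).
  rewrite mulr_sumr [X in _ - X]mulr_sumr -sumrB; apply: eq_bigr => i _; rewrite /Q; ring.
rewrite E.
have hC : \sum_i c i <= m%:R.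
  rewrite /c exchange_big /=.
  apply: le_trans (_ : \sum_(k < m) (1 : R) <= _); first by apply: ler_sum => k _; exact: sum1.
  by rewrite sumr_const card_ord.
have hS : (m%:R * (5 / 2 * n%:R * t + de)) * Z <= \sum_i c i * z i ^+ 2.
  rewrite /Z mulr_sumr; apply: ler_sum => i _; apply: ler_wpM2r; first exact: sqr_ge0.
  exact: hc.
have h1 : (1 - t) * ((m%:R * (5 / 2 * n%:R * t + de)) * Z) <= (1 - t) * \sum_i c i * z i ^+ 2.
  by apply: ler_wpM2l => //; lra.
have h2 : (1 - t) * t * (n%:R * Z) * (\sum_i c i) <= (1 - t) * t * (n%:R * Z) * m%:R.
  apply: ler_wpM2l => //; apply: mulr_ge0; last by apply: mulr_ge0.
  by apply: mulr_ge0 => //; lra.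
have h3 : 0 <= m%:R * Z * (t * (3 / 2 * n%:R * (1 - t)) - t * de).
  by apply: mulr_ge0; [apply: mulr_ge0 | lra].
lra.
Qed.

Lemma realsym_eig (R : realType) m n (A : 'M[R]_(m,n)) : (0 < n)%N ->
  exists a, eigenvalue (A^T *m A) a.
Proof.
move=> n0.
pose f := (@real_complex R).
pose Ac := map_mx f A.
have [a] := @eigenvalue_closed (R[i]) n (map_mx f (A^T *m A)) n0.
move/eigenvalueP => [x Hx x0].
have eS : map_mx f (A^T *m A) = Ac^T *m Ac by rewrite map_mxM map_trmx.
pose xc := map_mx (@conjc R) x.
have key : (x *m Ac^T *m (xc *m Ac^T)^T) 0 0 = a * (x *m xc^T) 0 0.
  rewrite trmx_mul trmxK -mulmxA (mulmxA Ac^T) -eS mulmxA Hx -scalemxAl mxE //.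
have h1 : forall k (w : 'rV[R[i]]_k), (w *m (map_mx (@conjc R) w)^T) 0 0 = \sum_j w 0 j * (w 0 j)^*%C.
  by move=> k w; rewrite mxE; apply: eq_bigr => j _; rewrite !mxE.
have Acr : map_mx (@conjc R) Ac = Ac.
  by apply/matrixP => i j; rewrite !mxE conjc_real.
have xcA : xc *m Ac^T = map_mx (@conjc R) (x *m Ac^T).
  apply/matrixP => i j; rewrite !mxE rmorph_sum /=; apply: eq_bigr => k _.
  by rewrite !mxE rmorphM /=; congr (_ * _); rewrite /f /= oppr0.
rewrite xcA !h1 in key.
have ge : forall k (w : 'rV[R[i]]_k), 0 <= \sum_j w 0 j * (w 0 j)^*%C.
  by move=> k w; apply: sumr_ge0 => j _; exact: mulcJ_ge0.
have D0 : \sum_j x 0 j * (x 0 j)^*%C != 0.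
  apply: contra x0 => /eqP /psumr_eq0P H.
  have {}H : forall j, x 0 j = 0.
    move=> j; have /eqP := H (fun j _ => mulcJ_ge0 (x 0 j)) j isT.
    by rewrite mulf_eq0 conjc_eq0 orbb => /eqP.
  by apply/eqP/matrixP => i j; rewrite ord1 !mxE H.
have ea : a = (\sum_j (x *m Ac^T) 0 j * ((x *m Ac^T) 0 j)^*%C) / \sum_j x 0 j * (x 0 j)^*%C.
  by rewrite key mulfK.
have ar : a \is Num.real.
  by apply: ger0_real; rewrite ea divr_ge0.
exists (complex.Re a).
rewrite -(eigenvalue_map f).
apply/eigenvalueP; exists x => //; rewrite Hx; congr (_ *: _).
exact/esym/RRe_real.
Qed.

Lemma count_iota_sum (R : realFieldType) (p : pred nat) m :
  ((count p (iota 1 m))%:R : R) = \sum_(k < m) (p k.+1)%:R.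
Proof.
elim: m => [|m IH]; first by rewrite big_ord0.
have -> : iota 1 m.+1 = iota 1 m ++ [:: m.+1]%N.
  by rewrite -(addn1 m) iotaD addnC.
by rewrite count_cat natrD IH big_ord_recr /= addn0.
Qed.

Lemma le_bigmax_seq (R : realFieldType) (I : eqType) (r : seq I) (F : I -> R) i :
  i \in r -> F i <= \big[Num.max/0]_(j <- r) F j.
Proof.
elim: r => // a r IH; rewrite inE big_cons => /orP[/eqP->|/IH h].
  by rewrite le_max lexx.
by rewrite le_max h orbT.
Qed.

Lemma le_bigmax_ord (R : realFieldType) n (F : 'I_n -> R) i :
  F i <= \big[Num.max/0]_(j < n) F j.
Proof. by apply: le_bigmax_seq; rewrite mem_index_enum. Qed.

Lemma count_le (R : realType) d (u : nat -> 'rV[R]_d) m C :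
  (count_in u m C <= m)%N.
Proof.
rewrite /count_in; apply: leq_trans (size_undup _) _.
by rewrite size_map size_filter; apply: leq_trans (count_size _ _) _; rewrite size_iota.
Qed.

Lemma count_ge (R : realType) d (u : nat -> 'rV[R]_d) m C :
  ((count_in u m C)%:R : R) <= \sum_(k < m) (`[< C (u k.+1) >])%:R.
Proof.
rewrite -(count_iota_sum _ (fun k => `[< C (u k) >])) ler_nat.
rewrite /count_in; apply: leq_trans (size_undup _) _.
by rewrite size_map size_filter.
Qed.

Theorem lemma4p8 (R : realType) (d n : nat) (v : 'I_n -> 'rV[R]_d)
  (Delta : {set {set 'I_n}})
  (hfan : simplicial_fan v Delta) (hpoly : polytopal v Delta)
  (u : nat -> 'rV[R]_d) (hu : forall k, (0 < k)%N -> vnorm (u k) = 1)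
  (t delta : R) (N : nat)
  (ht0 : 0 <= t) (ht : t < 1 / 2) (hdelta : 0 < delta)
  (hcount : forall m, (N <= m)%N -> forall i : 'I_n,
     m%:R * (5 / 2 * n%:R * t + delta) <= (count_in u m (C_t v Delta t i))%:R) :
  forall m, (N <= m)%N ->
    lambda1 ((A_U v Delta u m)^T *m A_U v Delta u m) >=
      m%:R * delta / \big[Num.max/0]_(i < n) vnorm (v i) ^+ 2.
Proof.
move=> m Nm.
set A := A_U v Delta u m.
have [n0|npos] := posnP n.
  have E : [set a : R | eigenvalue (A^T *m A) a] = set0.
    apply/seteqP; split => // a /= /eigenvalueP [x _ x0].
    by move/eqP: x0; apply; apply/matrixP => i [j hj]; exfalso; by rewrite n0 in hj.
  rewrite /lambda1 E inf0 big_pred0 ?invr0 ?mulr0 //.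
  by move=> [i hi]; exfalso; rewrite n0 in hi.
have [v0 _ _ _ _] := hfan.
set w := fun j => vnorm (v j).
have dot_pos : forall j, 0 < dotv (v j) (v j).
  move=> j; rewrite /dotv lt_def; apply/andP; split; last first.
    by apply: sumr_ge0 => k _; rewrite -expr2 sqr_ge0.
  apply: contra (v0 j) => /eqP/psumr_eq0P H.
  have {}H := H (fun k _ => (sqr_ge0 (v j 0 k) : 0 <= v j 0 k * v j 0 k)).
  apply/eqP/matrixP => a b; rewrite ord1 mxE.
  by have /eqP := H b isT; rewrite -expr2 sqrf_eq0 => /eqP.
have wpos : forall j, 0 < w j by move=> j; rewrite /w /vnorm sqrtr_gt0.
have w2 : forall j, w j ^+ 2 = dotv (v j) (v j).
  by move=> j; rewrite /w /vnorm sqr_sqrtr // ltW.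
set M := \big[Num.max/0]_(i < n) vnorm (v i) ^+ 2.
have wM : forall j, w j ^+ 2 <= M.
  by move=> j; rewrite /M /w; exact: (le_bigmax_ord (fun i => vnorm (v i) ^+ 2) j).
have Mpos : 0 < M.
  by apply: lt_le_trans (wM (Ordinal npos)); rewrite exprn_gt0.
have hd : t * delta <= t * (3 / 2 * n%:R * (1 - t)).
  have h := hcount N.+1 (leqnSn N) (Ordinal npos).
  have hc : ((count_in u N.+1 (C_t v Delta t (Ordinal npos)))%:R : R) <= N.+1%:R.
    by rewrite ler_nat count_le.
  have hN : 0 < (N.+1)%:R :> R by rewrite ltr0n.
  have h1 : 5 / 2 * n%:R * t + delta <= 1.
    have := le_trans h hc; rewrite -{2}(mulr1 N.+1%:R) ler_pM2l //.
  have hn : 1 <= n%:R :> R by rewrite ler1n.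
  apply: ler_wpM2l => //; nra.
set P := fun (k : 'I_m) (i : 'I_n) => `[< C_t v Delta t i (u k.+1) >].
have hP : forall k i, P k i -> forall j, `|A k j * w j - (j == i)%:R| <= t.
  by move=> k i /asboolP H j; rewrite /A /A_U mxE; exact: H.
have uP : forall k i j, P k i -> P k j -> i = j.
  move=> k i j Pi Pj; apply/eqP; apply/negPn/negP => ij.
  have h1 := hP k i Pi i; have h2 := hP k j Pj i.
  rewrite eqxx in h1; rewrite (negbTE ij) in h2.
  move: h1 h2; set a := A k i * w i => h1 h2.
  rewrite subr0 in h2; rewrite -normrN opprB in h1.
  have := ler_normD (1 - a) a; rewrite subrK normr1; lra.
have hc : forall i, m%:R * (5 / 2 * n%:R * t + delta) <= \sum_k (P k i)%:R.
  by move=> i; apply: le_trans (hcount m Nm i) _; exact: count_ge.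
have t1 : t < 1 by lra.
have key := main_bound ht0 t1 uP hP hc hd.
rewrite /lambda1; apply: lb_le_inf.
  have [a ea] := realsym_eig A npos; by exists a.
move=> a /= /eigenvalueP [x Hx x0].
pose y := fun j => x 0 j.
have Y : (x *m (A^T *m A) *m x^T) 0 0 = a * \sum_j y j ^+ 2.
  rewrite Hx -scalemxAl mxE; congr (_ * _); rewrite mxE.
  by apply: eq_bigr => j _; rewrite mxE expr2.
have X : (x *m (A^T *m A) *m x^T) 0 0 = \sum_k (\sum_j A k j * w j * (y j / w j)) ^+ 2.
  rewrite mulmxA -mulmxA -{2}(trmxK A) -trmx_mul.
  set b := x *m A^T. rewrite !mxE.
  have hb : forall k, b 0 k = \sum_j A k j * w j * (y j / w j).
    move=> k; rewrite /b mxE; apply: eq_bigr => j _; rewrite mxE /y.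
    rewrite -mulrA mulrC; congr (_ * _); rewrite mulrC divfK //; exact: lt0r_neq0 (wpos j).
  apply: eq_bigr => k _; rewrite [b^T k 0]mxE hb expr2 //.
have Ypos : 0 < \sum_j y j ^+ 2.
  rewrite lt_def sumr_ge0 ?andbT => [|j _]; last exact: sqr_ge0.
  apply: contra x0 => /eqP/psumr_eq0P H.
  have {}H := H (fun j _ => sqr_ge0 (y j)).
  apply/eqP/matrixP => a0 b; rewrite ord1 mxE.
  by have /eqP := H b isT; rewrite sqrf_eq0 => /eqP.
have Zs : (\sum_j y j ^+ 2) / M <= \sum_j (y j / w j) ^+ 2.
  rewrite mulr_suml; apply: ler_sum => j _; rewrite expr_div_n.
  apply: ler_wpM2l; first exact: sqr_ge0.
  rewrite lef_pV2 ?posrE ?exprn_gt0 //; exact: wM.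
have K := key (fun j => y j / w j).
rewrite -X Y in K.
have md : 0 <= m%:R * delta by apply: mulr_ge0; [exact: ler0n | exact: ltW].
have H2 : m%:R * delta / M * (\sum_j y j ^+ 2) <= a * \sum_j y j ^+ 2.
  apply: le_trans K; rewrite -mulrA [M^-1 * _]mulrC; exact: ler_wpM2l.
by rewrite ler_pM2r in H2.
Qed.
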